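(* For all integers $m\geq1$ and $n\geq0$, \[ \int_0^\infty\frac{\sum_{j=0}^{n+1}\binom{n+1}{j}L_{4m(n+1-j)}x^{2j}}{(x^4+L_{4m}x^2+1)^{n+1}}\ln x\,dx=-\binom{2n}{n}\frac{\pi}{2^{2n+1}}\Bigl(2m\sqrt5\,F_{2m(2n+1)}\ln\alpha+O_nL_{2m(2n+1)}\Bigr) \] and \[ \int_0^\infty\frac{\sum_{j=0}^{n+1}\binom{n+1}{j}F_{4m(n+1-j)}x^{2j}}{(x^4+L_{4m}x^2+1)^{n+1}}\ln x\,dx=-\binom{2n}{n}\frac{\pi}{2^{2n+1}}\Bigl(\frac{2m}{\sqrt5}L_{2m(2n+1)}\ln\alpha+O_nF_{2m(2n+1)}\Bigr). \]
   Context: $O_n=\sum_{j=1}^n\frac1{2j-1}$ ($O_0=0$). $F_n$ and $L_n$ are the Fibonacci and Lucas numbers ($F_0=0,F_1=1$, $L_0=2,L_1=1$, $u_n=u_{n-1}+u_{n-2}$), and $\alpha=(1+\sqrt5)/2$. *)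

(* Defs.v *)
From Stdlib Require Import Reals.
From Coquelicot Require Import Coquelicot.
Open Scope R_scope.

Fixpoint fibL (n : nat) : R * R :=
  (* returns (F_n, F_{n+1}) *)
  match n with
  | O => (0, 1)
  | S k => let (a, b) := fibL k in (b, a + b)
  end.
Definition Fib (n : nat) : R := fst (fibL n).

Fixpoint lucL (n : nat) : R * R :=
  (* returns (L_n, L_{n+1}) *)
  match n with
  | O => (2, 1)
  | S k => let (a, b) := lucL k in (b, a + b)
  end.
Definition Luc (n : nat) : R := fst (lucL n).

Fixpoint Odd_harm (n : nat) : R :=
  match n with
  | O => 0
  | S k => Odd_harm k + / (2 * INR (S k) - 1)
  end.

Definition alpha : R := (1 + sqrt 5) / 2.

(* Main.v *)
Require Import Defs.
From Stdlib Require Import Reals Lra Lia Factorial.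
From Coquelicot Require Import Coquelicot.
Open Scope R_scope.

Definition Lim (Fl : (R -> Prop) -> Prop) (F : R -> R) (l : R) :=
  forall eps, 0 < eps -> Fl (fun x => Rabs (F x - l) < eps).


Lemma Lim_const {Fl : (R -> Prop) -> Prop} {FF : Filter Fl} c : Lim Fl (fun _ => c) c.
Proof. intros e He. apply filter_forall. intros; rewrite Rminus_diag, Rabs_R0; lra. Qed.

Lemma Lim_plus {Fl : (R -> Prop) -> Prop} {FF : Filter Fl} F G a b : Lim Fl F a -> Lim Fl G b -> Lim Fl (fun x => F x + G x) (a + b).
Proof.
  unfold Lim in *. intros HF HG e He.
  generalize (filter_and (F:=Fl) _ _ (HF (e/2) ltac:(lra)) (HG (e/2) ltac:(lra))).
  apply filter_imp. intros x [H1 H2].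
  replace (F x + G x - (a + b)) with ((F x - a) + (G x - b)) by ring.
  eapply Rle_lt_trans; [apply Rabs_triang|lra].
Qed.

Lemma Lim_scal {Fl : (R -> Prop) -> Prop} {FF : Filter Fl} k F a : Lim Fl F a -> Lim Fl (fun x => k * F x) (k * a).
Proof.
  unfold Lim in *. intros HF e He.
  generalize (HF (e / (Rabs k + 1)) ltac:(apply Rdiv_lt_0_compat; [lra| generalize (Rabs_pos k); lra])).
  apply filter_imp. intros x H1.
  replace (k * F x - k * a) with (k * (F x - a)) by ring.
  rewrite Rabs_mult.
  assert (0 <= Rabs k) by apply Rabs_pos.
  assert (Rabs k * Rabs (F x - a) <= Rabs k * (e / (Rabs k + 1))).
  { apply Rmult_le_compat_l; lra. }
  assert (Rabs k * (e / (Rabs k + 1)) < e).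
  { apply (Rmult_lt_reg_r (Rabs k + 1)); [lra|].
    field_simplify; [nra|lra]. }
  lra.
Qed.

Lemma Lim_ext {Fl : (R -> Prop) -> Prop} {FF : Filter Fl} F G a : Fl (fun x => F x = G x) -> Lim Fl F a -> Lim Fl G a.
Proof.
  unfold Lim in *. intros He HF e Hep. generalize (filter_and (F:=Fl) _ _ He (HF e Hep)).
  apply filter_imp. intros x [H1 H2]. rewrite <- H1; auto.
Qed.

Lemma Lim_squeeze {Fl : (R -> Prop) -> Prop} {FF : Filter Fl} F B : Fl (fun x => Rabs (F x) <= B x) -> Lim Fl B 0 -> Lim Fl F 0.
Proof.
  unfold Lim in *. intros Hb HB e He. generalize (filter_and (F:=Fl) _ _ Hb (HB e He)).
  apply filter_imp. intros x [H1 H2]. rewrite Rminus_0_r in *.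
  generalize (Rle_abs (B x)); lra.
Qed.

Lemma Lim_comp_cont {Fl : (R -> Prop) -> Prop} {FF : Filter Fl} g F : Lim Fl F 0 -> continuous g 0 -> Lim Fl (fun x => g (F x)) (g 0).
Proof.
  unfold Lim in *. intros HF Hg e He.
  destruct (Hg (ball (g 0) e) (locally_ball _ (mkposreal e He))) as [d Hd].
  generalize (HF d (cond_pos d)). apply filter_imp. intros x Hx.
  apply Hd. unfold ball; simpl. unfold AbsRing_ball, abs, minus, plus, opp; simpl.
  rewrite Rminus_0_r in Hx. now replace (F x + - 0) with (F x) by ring.
Qed.


Lemma Lim_minus {Fl} {FF : Filter Fl} F G a b : Lim Fl F a -> Lim Fl G b -> Lim Fl (fun x => F x - G x) (a - b).
Proof.
  intros. unfold Rminus. apply Lim_plus; auto.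
  apply (Lim_ext (fun x => -1 * G x)). apply filter_forall; intros; ring.
  replace (- b) with (-1 * b) by ring. now apply Lim_scal.
Qed.

Lemma ev0 d : 0 < d -> at_right 0 (fun x => 0 < x < d).
Proof.
  intros Hd. exists (mkposreal d Hd). intros y Hy Hy0. simpl in *.
  unfold ball in Hy; simpl in Hy; unfold AbsRing_ball, abs, minus, plus, opp in Hy; simpl in Hy.
  rewrite Ropp_0, Rplus_0_r in Hy. apply Rabs_def2 in Hy. lra.
Qed.

Lemma evI M : Rbar_locally p_infty (fun x => M < x).
Proof. exists M; auto. Qed.

Lemma Lim0_intro F l : (forall e, 0 < e -> exists d, 0 < d /\ forall x, 0 < x < d -> Rabs (F x - l) < e) -> Lim (at_right 0) F l.
Proof.
  intros H e He. destruct (H e He) as [d [Hd Hx]].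
  generalize (ev0 d Hd). apply filter_imp. auto.
Qed.

Lemma LimI_intro F l : (forall e, 0 < e -> exists M, forall x, M < x -> Rabs (F x - l) < e) -> Lim (Rbar_locally p_infty) F l.
Proof. intros H e He. destruct (H e He) as [M HM]. exists M. auto. Qed.

Lemma AD (F f : R -> R) l0 l1 :
  (forall x, 0 < x -> is_derive F x (f x)) ->
  (forall x, 0 < x -> continuous f x) ->
  Lim (at_right 0) F l0 -> Lim (Rbar_locally p_infty) F l1 ->
  is_RInt_gen f (at_right 0) (Rbar_locally p_infty) (l1 - l0).
Proof.
  unfold Lim in *. intros Hd Hc H0 H1 P [eps HP].
  assert (He : 0 < eps / 2) by (generalize (cond_pos eps); lra).
  generalize (filter_and (F:=at_right 0) _ _ (H0 _ He) (ev0 1 Rlt_0_1)). intros Q0.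
  generalize (filter_and (F:=Rbar_locally p_infty) _ _ (H1 _ He) (evI 0)). intros Q1.
  exists (fun x => Rabs (F x - l0) < eps / 2 /\ 0 < x < 1)
         (fun x => Rabs (F x - l1) < eps / 2 /\ 0 < x); auto.
  intros a b [Ha1 Ha2] [Hb1 Hb2]. exists (F b - F a). split.
  - apply (is_RInt_derive F f a b).
    + intros x Hx. apply Hd. destruct (Rle_dec a b).
      * rewrite Rmin_left in Hx; lra.
      * rewrite Rmin_right in Hx; lra.
    + intros x Hx. apply Hc. destruct (Rle_dec a b).
      * rewrite Rmin_left in Hx; lra.
      * rewrite Rmin_right in Hx; lra.
  - apply HP. unfold ball; simpl; unfold AbsRing_ball, abs, minus, plus, opp; simpl.
    replace (F b - F a + - (l1 - l0)) with ((F b - l1) - (F a - l0)) by ring.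
    eapply Rle_lt_trans. apply Rabs_triang. rewrite Rabs_Ropp. lra.
Qed.


Lemma ln_le_id y : 0 < y -> ln y < y.
Proof.
  intros Hy. generalize (exp_ineq1_le (ln y)). rewrite exp_ln by auto. lra.
Qed.

Lemma ln_sq x : 0 < x -> ln x = 2 * ln (sqrt x).
Proof.
  intros Hx. rewrite <- (sqrt_sqrt x) at 1 by lra.
  rewrite ln_mult by (apply sqrt_lt_R0; auto). ring.
Qed.

Lemma L_xlnx : Lim (at_right 0) (fun x => x * ln x) 0.
Proof.
  apply (Lim_squeeze _ (fun x => 2 * sqrt x)).
  - generalize (ev0 1 Rlt_0_1). apply filter_imp. intros x [H0 H1].
    assert (Hs : 0 < sqrt x) by (apply sqrt_lt_R0; auto).
    assert (ln x < 0) by (rewrite <- ln_1; apply ln_increasing; lra).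
    rewrite Rabs_left by nra.
    generalize (ln_le_id (/ sqrt x) ltac:(apply Rinv_0_lt_compat; auto)).
    rewrite ln_Rinv by auto. rewrite (ln_sq x H0).
    intros Hq. 
    assert (- ln (sqrt x) * sqrt x < 1).
    { apply (Rmult_lt_compat_r (sqrt x)) in Hq; auto. rewrite Rinv_l in Hq; lra. }
    rewrite <- (sqrt_sqrt x) at 1 by lra. nra.
  - intros e He. generalize (ev0 ((e/2)^2) ltac:(apply pow_lt; lra)).
    apply filter_imp. intros x [H0 H1]. rewrite Rminus_0_r.
    assert (Hs : 0 < sqrt x) by (apply sqrt_lt_R0; auto).
    rewrite Rabs_right by lra.
    assert (sqrt x < e / 2).
    { rewrite <- (sqrt_pow2 (e/2)) by lra. apply sqrt_lt_1_alt; lra. }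
    lra.
Qed.

Lemma L_lnx_x : Lim (Rbar_locally p_infty) (fun x => ln x / x) 0.
Proof.
  apply (Lim_squeeze _ (fun x => 2 / sqrt x)).
  - generalize (evI 1). apply filter_imp. intros x H1.
    assert (Hs : 0 < sqrt x) by (apply sqrt_lt_R0; lra).
    assert (0 < ln x) by (rewrite <- ln_1; apply ln_increasing; lra).
    rewrite Rabs_right by (apply Rle_ge; apply Rlt_le; apply Rdiv_lt_0_compat; lra).
    generalize (ln_le_id (sqrt x) Hs). intros Hq.
    rewrite (ln_sq x) by lra.
    assert (x = sqrt x * sqrt x) by (rewrite sqrt_sqrt; lra).
    rewrite H0 at 2. apply Rle_trans with (2 * sqrt x / (sqrt x * sqrt x)).
    + unfold Rdiv. apply Rmult_le_compat_r. apply Rlt_le, Rinv_0_lt_compat; nra. lra.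
    + right. field. lra.
  - intros e He. exists ((2/e)^2). intros x Hx. rewrite Rminus_0_r.
    assert (0 < (2/e)^2) by (apply pow_lt; apply Rdiv_lt_0_compat; lra).
    assert (Hs : 0 < sqrt x) by (apply sqrt_lt_R0; lra).
    assert (2 / e < sqrt x).
    { rewrite <- (sqrt_pow2 (2/e)) by (apply Rlt_le, Rdiv_lt_0_compat; lra). apply sqrt_lt_1_alt; lra. }
    rewrite Rabs_right by (apply Rle_ge, Rlt_le, Rdiv_lt_0_compat; lra).
    apply (Rmult_lt_reg_r (sqrt x)); auto. unfold Rdiv. rewrite Rmult_assoc, Rinv_l by lra.
    apply (Rmult_lt_reg_r (/ e)). apply Rinv_0_lt_compat; lra.
    replace (2 * 1 * / e) with (2 / e) by (unfold Rdiv; ring).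
    replace (e * sqrt x * / e) with (sqrt x) by (field; lra). lra.
Qed.

Lemma L_id0 : Lim (at_right 0) (fun x => x) 0.
Proof.
  intros e He. generalize (ev0 e He). apply filter_imp. intros x Hx.
  rewrite Rminus_0_r, Rabs_right; lra.
Qed.

Lemma L_inv : Lim (Rbar_locally p_infty) (fun x => / x) 0.
Proof.
  intros e He. exists (/ e). intros x Hx. rewrite Rminus_0_r.
  assert (0 < / e) by (apply Rinv_0_lt_compat; auto).
  rewrite Rabs_right by (apply Rle_ge, Rlt_le, Rinv_0_lt_compat; lra).
  rewrite <- (Rinv_inv e). apply Rinv_lt_contravar; nra.
Qed.

Lemma atan_le_id y : 0 <= y -> 0 <= atan y <= y.
Proof.
  intros Hy. destruct (Req_dec y 0) as [->|Hy0]. rewrite atan_0; lra.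
  split.
  - rewrite <- atan_0. left. apply atan_increasing. lra.
  - destruct (MVT_gen atan 0 y (fun x => / (1 + x²))) as [c [Hc Heq]].
    + intros; apply is_derive_atan.
    + intros x _. apply continuity_pt_filterlim. apply (ex_derive_continuous atan). auto_derive. auto.
    + rewrite atan_0 in Heq. rewrite Rminus_0_r in Heq. rewrite Heq.
      assert (0 <= c²) by apply Rle_0_sqr.
      assert (/ (1 + c²) <= 1).
      { rewrite <- Rinv_1. apply Rinv_le_contravar; lra. }
      assert (0 < / (1 + c²)) by (apply Rinv_0_lt_compat; lra). nra.
Qed.

Definition hT (t : R) : R := if Req_EM_T t 0 then 1 else atan t / t.

Lemma hT_cont t : continuous hT t.
Proof.
  destruct (Req_EM_T t 0) as [->|Ht].
  - intros P [eps HP].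
    destruct (derivable_pt_lim_atan 0 eps (cond_pos eps)) as [d Hd].
    exists d. intros y Hy. apply HP.
    unfold ball in *; simpl in *; unfold AbsRing_ball, abs, minus, plus, opp in *; simpl in *.
    unfold hT. destruct (Req_EM_T 0 0) as [_|]; [|congruence].
    destruct (Req_EM_T y 0) as [->|Hy0].
    + rewrite Rplus_opp_r, Rabs_R0. apply cond_pos.
    + rewrite Ropp_0, Rplus_0_r in Hy.
      specialize (Hd y Hy0 Hy). rewrite Rplus_0_l, atan_0, Rminus_0_r in Hd.
      replace (/ (1 + 0 * (0 * 1))) with 1 in Hd by field. exact Hd.
  - apply (continuous_ext_loc _ (fun x => atan x / x)).
    + assert (Hp : 0 < Rabs t) by (apply Rabs_pos_lt; auto).
      exists (mkposreal _ Hp). intros y Hy. unfold hT.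
      destruct (Req_EM_T y 0) as [->|]; auto.
      unfold ball in Hy; simpl in Hy; unfold AbsRing_ball, abs, minus, plus, opp in Hy; simpl in Hy.
      rewrite Rplus_0_l, Rabs_Ropp in Hy. lra.
    + apply (ex_derive_continuous (fun x : R => atan x / x)). auto_derive. auto.
Qed.

Definition T (y : R) : R := RInt hT 0 y.

Lemma T_deriv y : is_derive T y (hT y).
Proof.
  apply (is_derive_RInt hT T 0). 2: apply hT_cont.
  apply filter_forall. intros b. unfold T. apply (RInt_correct hT). apply ex_RInt_continuous.
  intros; apply hT_cont.
Qed.

Lemma T_0 : T 0 = 0.
Proof. unfold T. exact (RInt_point (V:=R_CompleteNormedModule) 0 hT). Qed.

Lemma T_cont y : continuous T y.
Proof. apply (ex_derive_continuous T). eexists. apply T_deriv. Qed.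

Lemma hT_pos y : 0 < y -> hT y = atan y / y.
Proof. intros. unfold hT. destruct (Req_EM_T y 0); [lra|auto]. Qed.

Lemma T_refl y : 0 < y -> T y - T (/ y) = PI / 2 * ln y.
Proof.
  intros Hy.
  set (D := fun y => T y - T (/ y) - PI / 2 * ln y).
  assert (HD : forall x, 0 < x -> is_derive D x 0).
  { intros x Hx. unfold D.
    evar (d : R). replace 0 with d. 
    apply @is_derive_minus. apply @is_derive_minus. apply T_deriv.
    apply (is_derive_comp T Rinv). apply T_deriv. apply (is_derive_inv (fun y => y)).
    apply (is_derive_id x). simpl; lra.
    apply @is_derive_scal. apply is_derive_ln; auto.
    unfold d. rewrite !hT_pos; [|apply Rinv_0_lt_compat; lra|lra].
    rewrite atan_inv by auto. unfold scal, minus, plus, opp; simpl; unfold mult; simpl.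
    unfold one; simpl. field. lra. }
  assert (H1 : is_RInt (fun _ => 0) 1 y (minus (D y) (D 1))).
  { apply (is_RInt_derive D (fun _ => 0)).
    - intros x Hx. apply HD. destruct (Rle_dec 1 y).
      + rewrite Rmin_left in Hx; lra.
      + rewrite Rmin_right in Hx; lra.
    - intros. apply continuous_const. }
  generalize (is_RInt_const 1 y 0). intros H2.
  apply (is_RInt_unique (V:=R_CompleteNormedModule)) in H1. apply (is_RInt_unique (V:=R_CompleteNormedModule)) in H2. rewrite H1 in H2.
  unfold D in H2. rewrite Rinv_1, ln_1 in H2.
  unfold minus, plus, opp, scal in H2; simpl in H2. unfold mult in H2; simpl in H2. lra.
Qed.


Lemma Lim_eqv {Fl : (R -> Prop) -> Prop} F a b : a = b -> Lim Fl F a -> Lim Fl F b.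
Proof. intros ->; auto. Qed.

Definition Ak (n : nat) (s x : R) : R := / (x ^ 2 + s ^ 2) ^ (S n).
Definition Jv (n : nat) (s : R) : R := PI * Binomial.C (2 * n) n / (2 ^ (2 * n + 1) * s ^ (2 * n + 1)).

Lemma is_derive_eq (f : R -> R) x l l' : is_derive f x l -> l = l' -> is_derive f x l'.
Proof. intros H ->; auto. Qed.

Lemma D_pos s x : 0 < s -> 0 < x ^ 2 + s ^ 2.
Proof. intros. nra. Qed.

Lemma Ak_rec n s x : 0 < s -> Ak n s x = (x ^ 2 + s ^ 2) * Ak (S n) s x.
Proof.
  intros Hs. unfold Ak. generalize (D_pos s x Hs); intros HD.
  assert (0 < (x ^ 2 + s ^ 2) ^ n) by (apply pow_lt; auto).
  change ((x ^ 2 + s ^ 2) ^ S (S n)) with ((x ^ 2 + s ^ 2) * (x ^ 2 + s ^ 2) ^ S n).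
  change ((x ^ 2 + s ^ 2) ^ S n) with ((x ^ 2 + s ^ 2) * (x ^ 2 + s ^ 2) ^ n).
  field. split; lra.
Qed.

Lemma dXL n s x : 0 < x -> 0 < s ->
  is_derive (fun x => x * ln x * Ak n s x) x
    (ln x * Ak n s x + Ak n s x - 2 * (INR n + 1) * x ^ 2 * ln x * Ak (S n) s x).
Proof.
  intros Hx Hs. unfold Ak. generalize (D_pos s x Hs); intros HD.
  assert (0 < (x ^ 2 + s ^ 2) ^ n) by (apply pow_lt; auto).
  auto_derive.
  - repeat split; auto. simpl in *. nra.
  - change (match n with 0%nat => 1 | S _ => INR n + 1 end) with (INR (S n)). rewrite S_INR.
    change ((x ^ 2 + s ^ 2) ^ S (S n)) with ((x ^ 2 + s ^ 2) * ((x ^ 2 + s ^ 2) * (x ^ 2 + s ^ 2) ^ n)).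
    change ((x ^ 2 + s ^ 2) ^ S n) with ((x ^ 2 + s ^ 2) * (x ^ 2 + s ^ 2) ^ n).
    simpl in *. field. repeat split; lra.
Qed.

Lemma dX n s x : 0 < s ->
  is_derive (fun x => x * Ak n s x) x
    (Ak n s x - 2 * (INR n + 1) * x ^ 2 * Ak (S n) s x).
Proof.
  intros Hs. unfold Ak. generalize (D_pos s x Hs); intros HD.
  assert (0 < (x ^ 2 + s ^ 2) ^ n) by (apply pow_lt; auto).
  auto_derive.
  - repeat split; auto. simpl in *. nra.
  - change (match n with 0%nat => 1 | S _ => INR n + 1 end) with (INR (S n)). rewrite S_INR.
    change ((x ^ 2 + s ^ 2) ^ S (S n)) with ((x ^ 2 + s ^ 2) * ((x ^ 2 + s ^ 2) * (x ^ 2 + s ^ 2) ^ n)).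
    change ((x ^ 2 + s ^ 2) ^ S n) with ((x ^ 2 + s ^ 2) * (x ^ 2 + s ^ 2) ^ n).
    simpl in *. field. repeat split; lra.
Qed.

Lemma Ak_pos n s x : 0 < s -> 0 < Ak n s x.
Proof. intros. unfold Ak. apply Rinv_0_lt_compat, pow_lt, D_pos; auto. Qed.

Lemma Ak_le0 n s x : 0 < s -> Ak n s x <= / (s ^ 2) ^ (S n).
Proof.
  intros Hs. unfold Ak. apply Rinv_le_contravar. apply pow_lt; nra.
  apply pow_incr. nra.
Qed.

Lemma Ak_leI n s x : 0 < s -> 1 <= x -> Ak n s x <= / x ^ 2.
Proof.
  intros Hs Hx. unfold Ak. apply Rinv_le_contravar. nra.
  apply Rle_trans with ((x ^ 2 + s ^ 2) ^ 1). simpl; nra.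
  apply Rle_pow. nra. lia.
Qed.

Lemma Lim_XL0 n s : 0 < s -> Lim (at_right 0) (fun x => x * ln x * Ak n s x) 0.
Proof.
  intros Hs. apply (Lim_squeeze _ (fun x => - / (s ^ 2) ^ (S n) * (x * ln x))).
  - generalize (ev0 1 Rlt_0_1). apply filter_imp. intros x [H0 H1].
    assert (ln x < 0) by (rewrite <- ln_1; apply ln_increasing; lra).
    generalize (Ak_pos n s x Hs) (Ak_le0 n s x Hs). intros. 
    assert (x * ln x < 0) by nra.
    rewrite Rabs_left by nra.
    replace (- (x * ln x * Ak n s x)) with ((- (x * ln x)) * Ak n s x) by ring.
    replace (- / (s ^ 2) ^ (S n) * (x * ln x)) with ((- (x * ln x)) * / (s ^ 2) ^ (S n)) by ring.
    apply Rmult_le_compat_l; lra.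
  - apply (Lim_eqv _ (- / (s ^ 2) ^ (S n) * 0)); [ring|]. apply Lim_scal. apply L_xlnx.
Qed.

Lemma Lim_XLI n s : 0 < s -> Lim (Rbar_locally p_infty) (fun x => x * ln x * Ak n s x) 0.
Proof.
  intros Hs. apply (Lim_squeeze _ (fun x => ln x / x)).
  - generalize (evI 1). apply filter_imp. intros x H1.
    assert (0 < ln x) by (rewrite <- ln_1; apply ln_increasing; lra).
    generalize (Ak_pos n s x Hs) (Ak_leI n s x Hs ltac:(lra)). intros. 
    rewrite Rabs_right by (apply Rle_ge; apply Rmult_le_pos; nra).
    replace (ln x / x) with (x * ln x * / x ^ 2) by (field; lra).
    apply Rmult_le_compat_l; nra.
  - apply L_lnx_x.
Qed.

Lemma Lim_X0 n s : 0 < s -> Lim (at_right 0) (fun x => x * Ak n s x) 0.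
Proof.
  intros Hs. apply (Lim_squeeze _ (fun x => / (s ^ 2) ^ (S n) * x)).
  - generalize (ev0 1 Rlt_0_1). apply filter_imp. intros x [H0 H1].
    generalize (Ak_pos n s x Hs) (Ak_le0 n s x Hs). intros. 
    rewrite Rabs_right by nra. nra.
  - apply (Lim_eqv _ (/ (s ^ 2) ^ (S n) * 0)); [ring|]. apply Lim_scal. apply L_id0.
Qed.

Lemma Lim_XI n s : 0 < s -> Lim (Rbar_locally p_infty) (fun x => x * Ak n s x) 0.
Proof.
  intros Hs. apply (Lim_squeeze _ (fun x => / x)).
  - generalize (evI 1). apply filter_imp. intros x H1.
    generalize (Ak_pos n s x Hs) (Ak_leI n s x Hs ltac:(lra)). intros. 
    rewrite Rabs_right by nra.
    replace (/ x) with (x * / x ^ 2) by (field; lra).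
    apply Rmult_le_compat_l; nra.
  - apply L_inv.
Qed.

Lemma Jv_rec n s : 0 < s -> Jv (S n) s = (2 * INR n + 1) / (2 * (INR n + 1) * s ^ 2) * Jv n s.
Proof.
  intros Hs. unfold Jv, Binomial.C.
  replace (2 * S n - S n)%nat with (S n) by lia.
  replace (2 * n - n)%nat with n by lia.
  replace (2 * S n)%nat with (S (S (2 * n))) by lia.
  replace (S (S (2 * n)) + 1)%nat with ((2 * n + 1) + 2)%nat by lia.
  rewrite !pow_add.
  change (fact (S (S (2 * n)))) with (S (S (2 * n)) * (S (2 * n) * fact (2 * n)))%nat.
  change (fact (S n)) with (S n * fact n)%nat.
  rewrite !mult_INR, !S_INR, !mult_INR.
  generalize (INR_fact_neq_0 (2 * n)) (INR_fact_neq_0 n) (pos_INR n). intros.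
  assert (0 < s ^ (2 * n + 1)) by (apply pow_lt; auto).
  assert (0 < 2 ^ (2 * n + 1)) by (apply pow_lt; lra).
  simpl. field. repeat split; try lra. all: apply pow_nonzero; lra.
Qed.

Lemma Odd_S n : Odd_harm (S n) = Odd_harm n + / (2 * INR n + 1).
Proof. change (Odd_harm (S n)) with (Odd_harm n + / (2 * INR (S n) - 1)). rewrite S_INR. f_equal. f_equal. ring. Qed.

Lemma atan_div_inv s x : 0 < s -> 0 < x -> atan (x / s) = PI / 2 - atan (s / x).
Proof.
  intros. rewrite <- atan_inv. f_equal. field. split; lra. apply Rdiv_lt_0_compat; lra.
Qed.

Lemma main_ind n s : 0 < s -> exists F G : R -> R,
  (forall x, 0 < x -> is_derive F x (ln x * Ak n s x)) /\
  (forall x, 0 < x -> is_derive G x (Ak n s x)) /\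
  Lim (at_right 0) F 0 /\ Lim (Rbar_locally p_infty) F (Jv n s * (ln s - Odd_harm n)) /\
  Lim (at_right 0) G 0 /\ Lim (Rbar_locally p_infty) G (Jv n s).
Proof.
  revert s. induction n as [|n IH]; intros s Hs.
  - exists (fun x => / s * (ln x * atan (x / s) - T (x / s))), (fun x => / s * atan (x / s)).
    assert (Jv0 : Jv 0 s = PI / (2 * s)).
    { unfold Jv, Binomial.C. simpl. field. lra. }
    assert (Hx0 : Lim (at_right 0) (fun x => x / s) 0).
    { apply (Lim_ext (fun x => / s * x)). apply filter_forall; intros; unfold Rdiv; ring.
      apply (Lim_eqv _ (/ s * 0)); [ring|]. apply Lim_scal, L_id0. }
    assert (HxI : Lim (Rbar_locally p_infty) (fun x => s / x) 0).
    { apply (Lim_eqv _ (s * 0)); [ring|]. apply Lim_scal, L_inv. }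
    assert (Hat : continuous atan 0).
    { apply (ex_derive_continuous atan). auto_derive. auto. }
    split; [|split; [|split; [|split; [|split]]]].
    + intros x Hx. eapply is_derive_eq.
      * apply @is_derive_scal. apply @is_derive_minus.
        -- auto_derive; [auto|reflexivity].
        -- apply (is_derive_comp T (fun x => x / s)). apply T_deriv. auto_derive; [auto|reflexivity].
      * rewrite hT_pos by (apply Rdiv_lt_0_compat; lra). unfold Ak. simpl.
        unfold minus, plus, opp, scal; simpl; unfold mult; simpl. unfold Rdiv.
        assert (0 < x*x+s*s) by nra. field. repeat split; lra.
    + intros x Hx. eapply is_derive_eq.
      * auto_derive; [auto|reflexivity].
      * unfold Ak. simpl. unfold Rdiv. assert (0 < x*x+s*s) by nra. field. repeat split; lra.
    + apply (Lim_eqv _ (/ s * (0 - 0))); [ring|]. apply Lim_scal. apply Lim_minus.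
      * apply (Lim_squeeze _ (fun x => - / s * (x * ln x))).
        -- generalize (ev0 1 Rlt_0_1). apply filter_imp. intros x [H0 H1].
           assert (ln x < 0) by (rewrite <- ln_1; apply ln_increasing; lra).
           generalize (atan_le_id (x / s) ltac:(apply Rlt_le, Rdiv_lt_0_compat; lra)). intros [Ha1 Ha2].
           rewrite Rabs_left1 by nra.
           replace (- / s * (x * ln x)) with (- ln x * (x / s)) by (field; lra). nra.
        -- apply (Lim_eqv _ (- / s * 0)); [ring|]. apply Lim_scal, L_xlnx.
      * apply (Lim_eqv _ (T 0)); [apply T_0|]. apply (Lim_comp_cont T (fun x => x / s)); auto. apply T_cont.
    + apply (Lim_ext (fun x => / s * (- (ln x * atan (s / x)) - T (s / x) + PI / 2 * ln s))).
      { generalize (evI 0). apply filter_imp. intros x Hx.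
        rewrite atan_div_inv by auto.
        generalize (T_refl (x / s) ltac:(apply Rdiv_lt_0_compat; lra)).
        replace (/ (x / s)) with (s / x) by (field; lra).
        rewrite ln_div by lra. intros. field_simplify_eq; [|lra].
        replace (T (x / s)) with (T (s / x) + PI / 2 * (ln x - ln s)) by lra. field. }
      rewrite Jv0. simpl Odd_harm.
      replace (PI / (2 * s) * (ln s - 0)) with (/ s * (- 0 - 0 + PI / 2 * ln s)) by (field; lra).
      apply Lim_scal. apply Lim_plus; [|apply Lim_const]. apply Lim_minus.
      * apply (Lim_eqv _ (-1 * 0)); [ring|].
        apply (Lim_ext (fun x => -1 * (ln x * atan (s / x)))). apply filter_forall; intros; ring.
        apply Lim_scal.
        apply (Lim_squeeze _ (fun x => s * (ln x / x))).
        -- generalize (evI 1). apply filter_imp. intros x H1.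
           assert (0 < ln x) by (rewrite <- ln_1; apply ln_increasing; lra).
           generalize (atan_le_id (s / x) ltac:(apply Rlt_le, Rdiv_lt_0_compat; lra)). intros [Ha1 Ha2].
           rewrite Rabs_right by nra.
           replace (s * (ln x / x)) with (ln x * (s / x)) by (field; lra). nra.
        -- apply (Lim_eqv _ (s * 0)); [ring|]. apply Lim_scal, L_lnx_x.
      * apply (Lim_eqv _ (T 0)); [apply T_0|]. apply (Lim_comp_cont T (fun x => s / x)); auto. apply T_cont.
    + apply (Lim_eqv _ (/ s * atan 0)); [rewrite atan_0; ring|]. apply Lim_scal.
      apply (Lim_comp_cont atan (fun x => x / s)); auto.
    + apply (Lim_ext (fun x => / s * (PI / 2 - atan (s / x)))).
      { generalize (evI 0). apply filter_imp. intros x Hx. rewrite (atan_div_inv s x) by auto; reflexivity. }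
      rewrite Jv0. replace (PI / (2 * s)) with (/ s * (PI / 2 - atan 0)) by (rewrite atan_0; field; lra).
      apply Lim_scal. apply Lim_minus. apply Lim_const.
      apply (Lim_comp_cont atan (fun x => s / x)); auto.
  - destruct (IH s Hs) as [F [G [HF [HG [HF0 [HFI [HG0 HGI]]]]]]].
    set (c := / (2 * (INR n + 1) * s ^ 2)).
    assert (0 <= INR n) by apply pos_INR.
    exists (fun x => c * ((2 * INR n + 1) * F x + x * ln x * Ak n s x - G x)),
           (fun x => c * ((2 * INR n + 1) * G x + x * Ak n s x)).
    split; [|split; [|split; [|split; [|split]]]].
    + intros x Hx. eapply is_derive_eq.
      * apply @is_derive_scal. apply @is_derive_minus. apply @is_derive_plus.
        apply @is_derive_scal. apply HF; auto. apply dXL; auto. apply HG; auto.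
      * unfold minus, plus, opp, scal; simpl; unfold mult; simpl.
        rewrite (Ak_rec n s x Hs). unfold c. field. split; nra.
    + intros x Hx. eapply is_derive_eq.
      * apply @is_derive_scal. apply @is_derive_plus.
        apply @is_derive_scal. apply HG; auto. apply dX; auto.
      * unfold minus, plus, opp, scal; simpl; unfold mult; simpl.
        rewrite (Ak_rec n s x Hs). unfold c. field. split; nra.
    + apply (Lim_eqv _ (c * ((2 * INR n + 1) * 0 + 0 - 0))); [ring|].
      apply Lim_scal. apply Lim_minus; auto. apply Lim_plus. apply Lim_scal; auto. apply Lim_XL0; auto.
    + replace (Jv (S n) s * (ln s - Odd_harm (S n))) with
        (c * ((2 * INR n + 1) * (Jv n s * (ln s - Odd_harm n)) + 0 - Jv n s)).
      * apply Lim_scal. apply Lim_minus; auto. apply Lim_plus. apply Lim_scal; auto. apply Lim_XLI; auto.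
      * rewrite Jv_rec, Odd_S by auto. unfold c. field. split; nra.
    + apply (Lim_eqv _ (c * ((2 * INR n + 1) * 0 + 0))); [ring|].
      apply Lim_scal. apply Lim_plus. apply Lim_scal; auto. apply Lim_X0; auto.
    + replace (Jv (S n) s) with (c * ((2 * INR n + 1) * Jv n s + 0)).
      * apply Lim_scal. apply Lim_plus. apply Lim_scal; auto. apply Lim_XI; auto.
      * rewrite Jv_rec by auto. unfold c. field. split; nra.
Qed.


Definition be : R := (1 - sqrt 5) / 2.

Lemma s5 : sqrt 5 * sqrt 5 = 5.
Proof. apply sqrt_sqrt. lra. Qed.

Lemma s5pos : 0 < sqrt 5.
Proof. apply sqrt_lt_R0. lra. Qed.

Lemma al_pos : 0 < alpha.
Proof. unfold alpha. generalize s5pos. lra. Qed.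

Lemma al_be : alpha * be = -1.
Proof. unfold alpha, be. generalize s5. intros. nra. Qed.

Lemma al_sq : alpha ^ 2 = alpha + 1.
Proof. unfold alpha. generalize s5. intros. simpl. nra. Qed.

Lemma be_sq : be ^ 2 = be + 1.
Proof. unfold be. generalize s5. intros. simpl. nra. Qed.

Lemma luc_eq k : lucL k = (alpha ^ k + be ^ k, alpha ^ S k + be ^ S k).
Proof.
  induction k as [|k IH].
  - simpl. unfold alpha, be. f_equal; field.
  - simpl lucL. rewrite IH. f_equal.
    change (alpha ^ S (S k)) with (alpha * (alpha * alpha ^ k)).
    change (be ^ S (S k)) with (be * (be * be ^ k)).
    change (alpha ^ S k) with (alpha * alpha ^ k). change (be ^ S k) with (be * be ^ k).
    generalize al_sq be_sq. simpl. intros. 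
    replace (alpha * (alpha * alpha ^ k)) with ((alpha * (alpha * 1)) * alpha ^ k) by ring.
    replace (be * (be * be ^ k)) with ((be * (be * 1)) * be ^ k) by ring.
    rewrite H, H0. ring.
Qed.

Lemma fib_eq k : fibL k = ((alpha ^ k - be ^ k) / sqrt 5, (alpha ^ S k - be ^ S k) / sqrt 5).
Proof.
  generalize s5pos; intros Hs.
  induction k as [|k IH].
  - simpl. unfold alpha, be. f_equal; field; lra.
  - simpl fibL. rewrite IH. f_equal.
    change (alpha ^ S (S k)) with (alpha * (alpha * alpha ^ k)).
    change (be ^ S (S k)) with (be * (be * be ^ k)).
    change (alpha ^ S k) with (alpha * alpha ^ k). change (be ^ S k) with (be * be ^ k).
    generalize al_sq be_sq. simpl. intros. 
    replace (alpha * (alpha * alpha ^ k)) with ((alpha * (alpha * 1)) * alpha ^ k) by ring.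
    replace (be * (be * be ^ k)) with ((be * (be * 1)) * be ^ k) by ring.
    rewrite H, H0. field. lra.
Qed.

Lemma Luc_eq k : Luc k = alpha ^ k + be ^ k.
Proof. unfold Luc. rewrite luc_eq. reflexivity. Qed.

Lemma Fib_eq k : Fib k = (alpha ^ k - be ^ k) / sqrt 5.
Proof. unfold Fib. rewrite fib_eq. reflexivity. Qed.

Lemma ab_even j : alpha ^ (2 * j) * be ^ (2 * j) = 1.
Proof.
  rewrite <- Rpow_mult_distr, pow_mult. replace ((alpha * be) ^ 2) with 1.
  apply pow1. rewrite al_be. ring.
Qed.

Lemma be_even j : be ^ (2 * j) = / alpha ^ (2 * j).
Proof.
  generalize (ab_even j). intros H. assert (alpha ^ (2 * j) <> 0) by (apply pow_nonzero; generalize al_pos; lra).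
  apply (Rmult_eq_reg_l (alpha ^ (2 * j))); auto. rewrite H, Rinv_r; auto.
Qed.

Definition ig (n : nat) (s x : R) : R := ln x * Ak n s x.

Lemma ig_cont n s x : 0 < s -> 0 < x -> continuous (ig n s) x.
Proof.
  intros Hs Hx. apply (ex_derive_continuous (ig n s)). unfold ig, Ak.
  assert (0 < (x ^ 2 + s ^ 2) ^ S n) by (apply pow_lt; apply D_pos; auto).
  auto_derive. split; auto. split; auto. simpl in H. lra.
Qed.

Lemma RInt_one n s : 0 < s -> is_RInt_gen (ig n s) (at_right 0) (Rbar_locally p_infty) (Jv n s * (ln s - Odd_harm n)).
Proof.
  intros Hs. destruct (main_ind n s Hs) as [F [G [HF [_ [HF0 [HFI _]]]]]].
  replace (Jv n s * (ln s - Odd_harm n)) with (Jv n s * (ln s - Odd_harm n) - 0) by ring.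
  apply (AD F); auto. intros; apply ig_cont; auto.
Qed.

Lemma RInt_two n s1 s2 k1 k2 : 0 < s1 -> 0 < s2 ->
  is_RInt_gen (fun x => k1 * ig n s1 x + k2 * ig n s2 x) (at_right 0) (Rbar_locally p_infty)
    (k1 * (Jv n s1 * (ln s1 - Odd_harm n)) + k2 * (Jv n s2 * (ln s2 - Odd_harm n))).
Proof.
  intros H1 H2.
  apply (is_RInt_gen_plus (Fa := at_right 0) (Fb := Rbar_locally p_infty) (fun x => k1 * ig n s1 x) (fun x => k2 * ig n s2 x)).
  - apply (is_RInt_gen_scal (fun x => ig n s1 x) k1). apply RInt_one; auto.
  - apply (is_RInt_gen_scal (fun x => ig n s2 x) k2). apply RInt_one; auto.
Qed.


Lemma a_pos m : 0 < alpha ^ m.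
Proof. apply pow_lt, al_pos. Qed.

Lemma Luc_4m m k : Luc (4 * m * k) = (alpha ^ (4 * m)) ^ k + (/ alpha ^ (4 * m)) ^ k.
Proof.
  rewrite Luc_eq. replace (4 * m * k)%nat with (2 * (2 * m * k))%nat by lia.
  rewrite be_even. replace (2 * (2 * m * k))%nat with (4 * m * k)%nat by lia.
  rewrite pow_inv, <- pow_mult. reflexivity.
Qed.

Lemma Fib_4m m k : Fib (4 * m * k) = ((alpha ^ (4 * m)) ^ k - (/ alpha ^ (4 * m)) ^ k) / sqrt 5.
Proof.
  rewrite Fib_eq. replace (4 * m * k)%nat with (2 * (2 * m * k))%nat by lia.
  rewrite be_even. replace (2 * (2 * m * k))%nat with (4 * m * k)%nat by lia.
  rewrite pow_inv, <- pow_mult. reflexivity.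
Qed.

Lemma NumL m n x : sum_f_R0 (fun j => Binomial.C (S n) j * Luc (4 * m * (S n - j)) * x ^ (2 * j)) (S n)
  = (x ^ 2 + alpha ^ (4 * m)) ^ (S n) + (x ^ 2 + / alpha ^ (4 * m)) ^ (S n).
Proof.
  rewrite !binomial, <- plus_sum. apply sum_eq. intros i Hi.
  rewrite Luc_4m, (pow_mult x 2 i). ring.
Qed.

Lemma NumF m n x : sum_f_R0 (fun j => Binomial.C (S n) j * Fib (4 * m * (S n - j)) * x ^ (2 * j)) (S n)
  = / sqrt 5 * ((x ^ 2 + alpha ^ (4 * m)) ^ (S n) - (x ^ 2 + / alpha ^ (4 * m)) ^ (S n)).
Proof.
  generalize s5pos; intros Hs.
  rewrite !binomial, <- minus_sum, scal_sum. apply sum_eq. intros i Hi.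
  rewrite Fib_4m, (pow_mult x 2 i). field. lra.
Qed.

Lemma Den m x : x ^ 4 + Luc (4 * m) * x ^ 2 + 1 = (x ^ 2 + alpha ^ (4 * m)) * (x ^ 2 + / alpha ^ (4 * m)).
Proof.
  replace (Luc (4 * m)) with (Luc (4 * m * 1)) by (f_equal; lia).
  rewrite Luc_4m. generalize (a_pos (4 * m)); intros. field. lra.
Qed.

Theorem theorem26 (m n : nat) (hm : (1 <= m)%nat) :
  is_RInt_gen
    (fun x : R =>
       sum_f_R0 (fun j => Binomial.C (S n) j * Luc (4 * m * (S n - j)) * x ^ (2 * j)) (S n)
       / (x ^ 4 + Luc (4 * m) * x ^ 2 + 1) ^ (S n) * ln x)
    (at_right 0) (Rbar_locally p_infty)
    (- Binomial.C (2 * n) n * (PI / 2 ^ (2 * n + 1))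
       * (2 * INR m * sqrt 5 * Fib (2 * m * (2 * n + 1)) * ln alpha
          + Odd_harm n * Luc (2 * m * (2 * n + 1))))
  /\
  is_RInt_gen
    (fun x : R =>
       sum_f_R0 (fun j => Binomial.C (S n) j * Fib (4 * m * (S n - j)) * x ^ (2 * j)) (S n)
       / (x ^ 4 + Luc (4 * m) * x ^ 2 + 1) ^ (S n) * ln x)
    (at_right 0) (Rbar_locally p_infty)
    (- Binomial.C (2 * n) n * (PI / 2 ^ (2 * n + 1))
       * (2 * INR m / sqrt 5 * Luc (2 * m * (2 * n + 1)) * ln alpha
          + Odd_harm n * Fib (2 * m * (2 * n + 1)))).
Proof.
  set (s1 := alpha ^ (2 * m)). set (s2 := / alpha ^ (2 * m)).
  assert (Hs1 : 0 < s1) by apply a_pos.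
  assert (Hs2 : 0 < s2) by (apply Rinv_0_lt_compat, a_pos).
  assert (Hsq1 : s1 ^ 2 = alpha ^ (4 * m)).
  { unfold s1. rewrite <- pow_mult. f_equal. lia. }
  assert (Hsq2 : s2 ^ 2 = / alpha ^ (4 * m)).
  { unfold s2. rewrite <- pow_inv, <- pow_mult, pow_inv. f_equal. f_equal. lia. }
  generalize s5pos; intros H5.
  generalize (a_pos (4 * m)); intros Ha.
  set (a := alpha ^ (4 * m)) in *.
  set (A := alpha ^ (2 * m * (2 * n + 1))).
  assert (HA : 0 < A) by apply a_pos.
  assert (HLk : Luc (2 * m * (2 * n + 1)) = A + / A).
  { rewrite Luc_eq. unfold A. replace (2 * m * (2 * n + 1))%nat with (2 * (m * (2 * n + 1)))%nat by lia.
    rewrite be_even. reflexivity. }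
  assert (HFk : Fib (2 * m * (2 * n + 1)) = (A - / A) / sqrt 5).
  { rewrite Fib_eq. unfold A. replace (2 * m * (2 * n + 1))%nat with (2 * (m * (2 * n + 1)))%nat by lia.
    rewrite be_even. reflexivity. }
  assert (Hp1 : s1 ^ (2 * n + 1) = A) by (unfold s1, A; rewrite <- pow_mult; reflexivity).
  assert (Hp2 : s2 ^ (2 * n + 1) = / A) by (unfold s2, A; rewrite <- pow_inv, <- pow_mult, pow_inv; reflexivity).
  assert (Hl1 : ln s1 = 2 * INR m * ln alpha).
  { unfold s1. rewrite ln_pow by apply al_pos. rewrite mult_INR. reflexivity. }
  assert (Hl2 : ln s2 = - (2 * INR m * ln alpha)).
  { unfold s2. rewrite ln_Rinv by apply a_pos. fold s1. rewrite Hl1. reflexivity. }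
  assert (HJ : forall s, 0 < s -> Jv n s = PI * Binomial.C (2 * n) n / 2 ^ (2 * n + 1) / s ^ (2 * n + 1)).
  { intros s Hs. unfold Jv. field. split; apply pow_nonzero; lra. }
  assert (Hx : forall x, 0 < x ^ 2 + a /\ 0 < x ^ 2 + / a).
  { intros x. assert (0 <= x ^ 2) by (simpl; nra). generalize (Rinv_0_lt_compat a Ha). lra. }
  split.
  - apply (is_RInt_gen_ext (Fa := at_right 0) (Fb := Rbar_locally p_infty) (fun x => 1 * ig n s1 x + 1 * ig n s2 x)).
    + apply filter_forall. intros [u v] x _.
      rewrite NumL, Den. unfold ig, Ak. rewrite Hsq1, Hsq2. fold a.
      destruct (Hx x) as [Hx1 Hx2].
      rewrite Rpow_mult_distr.
      assert (0 < (x ^ 2 + a) ^ S n) by (apply pow_lt; auto).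
      assert (0 < (x ^ 2 + / a) ^ S n) by (apply pow_lt; auto).
      match goal with |- ?l = ?r => change (l = r :> R) end; clearbody a. field. split; lra.
    + replace (- Binomial.C (2 * n) n * (PI / 2 ^ (2 * n + 1))
       * (2 * INR m * sqrt 5 * Fib (2 * m * (2 * n + 1)) * ln alpha
          + Odd_harm n * Luc (2 * m * (2 * n + 1))))
      with (1 * (Jv n s1 * (ln s1 - Odd_harm n)) + 1 * (Jv n s2 * (ln s2 - Odd_harm n))).
      * apply RInt_two; auto.
      * rewrite !HJ, Hp1, Hp2, Hl1, Hl2, HLk, HFk by auto.
        assert (0 < 2 ^ (2 * n + 1)) by (apply pow_lt; lra).
        match goal with |- ?l = ?r => change (l = r :> R) end; clearbody a. field. repeat split; lra.
  - apply (is_RInt_gen_ext (Fa := at_right 0) (Fb := Rbar_locally p_infty) (fun x => (- / sqrt 5) * ig n s1 x + (/ sqrt 5) * ig n s2 x)).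
    + apply filter_forall. intros [u v] x _.
      rewrite NumF, Den. unfold ig, Ak. rewrite Hsq1, Hsq2. fold a.
      destruct (Hx x) as [Hx1 Hx2].
      rewrite Rpow_mult_distr.
      assert (0 < (x ^ 2 + a) ^ S n) by (apply pow_lt; auto).
      assert (0 < (x ^ 2 + / a) ^ S n) by (apply pow_lt; auto).
      match goal with |- ?l = ?r => change (l = r :> R) end; clearbody a. field. repeat split; lra.
    + replace (- Binomial.C (2 * n) n * (PI / 2 ^ (2 * n + 1))
       * (2 * INR m / sqrt 5 * Luc (2 * m * (2 * n + 1)) * ln alpha
          + Odd_harm n * Fib (2 * m * (2 * n + 1))))
      with ((- / sqrt 5) * (Jv n s1 * (ln s1 - Odd_harm n)) + (/ sqrt 5) * (Jv n s2 * (ln s2 - Odd_harm n))).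
      * apply RInt_two; auto.
      * rewrite !HJ, Hp1, Hp2, Hl1, Hl2, HLk, HFk by auto.
        assert (0 < 2 ^ (2 * n + 1)) by (apply pow_lt; lra).
        match goal with |- ?l = ?r => change (l = r :> R) end; clearbody a. field. repeat split; lra.
Qed.
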